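(* Let $n \ge 2$ and $L$ be integers with $2 \le L \le n+1$. On the grid $\{1,\dots,n\}^2$ consider the following subsets: the lines $L_i = \{(i,k) : 1 \le k \le n\}$ for $1 \le i \le n$; the columns $C_j = \{(k,j) : 1 \le k \le n\}$ for $1 \le j \le n$; and, for each slope $a \in \{1,\dots,L-2\}$ and each $b \in \{1,\dots,n\}$, the diagonal $D^a_b = \{(k, r_n(ak+b)) : 1 \le k \le n\}$, where $r_n(m)$ denotes the unique element of $\{1,\dots,n\}$ congruent to $m$ modulo $n$. Then the family $\{L_k, C_k, D^a_k : 1 \le k \le n,\ 1 \le a \le L-2\}$ is an $N(n^2,n,L)$ multipool if and only if $L-2$ is smaller than the smallest prime divisor of $n$.
   Context: A family of subsets (pools) of a set of $n^2$ items is called an $N(n^2,n,L)$ multipool if: (1) each pool contains exactly $n$ items; (2) each item belongs to exactly $L$ pools; (3) any two distinct items belong to at most one common pool. *)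

(* Defs.v *)
From mathcomp Require Import all_boot.
Set Implicit Arguments. Unset Strict Implicit. Unset Printing Implicit Defensive.

Definition is_multipool (T I : finType) (F : I -> {set T}) (n L : nat) : Prop :=
  [/\ forall i : I, #|F i| = n,
      forall x : T, #|[set i : I | x \in F i]| = L
    & forall x y : T, x != y -> #|[set i : I | (x \in F i) && (y \in F i)]| <= 1].

Definition rn (n m : nat) : nat := if m %% n == 0 then n else m %% n.

(* The grid {1..n}^2 is represented by 'I_n * 'I_n, the element (i, j)
   standing for the point (i+1, j+1). *)
Definition grid (n : nat) := ('I_n * 'I_n)%type.

Definition gline (n : nat) (i : 'I_n) : {set grid n} := [set p : grid n | p.1 == i].
Definition gcol (n : nat) (j : 'I_n) : {set grid n} := [set p : grid n | p.2 == j].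
Definition gdiag (n a b : nat) : {set grid n} :=
  [set p : grid n | (p.2 : nat).+1 == rn n (a * (p.1 : nat).+1 + b)].

(* Index type of the family: lines, columns, and diagonals D^(a+1)_(b+1)
   for a : 'I_(L-2), b : 'I_n. *)
Definition pool_index (n L : nat) := ('I_n + 'I_n + 'I_(L - 2) * 'I_n)%type.

Definition grid_family (n L : nat) (k : pool_index n L) : {set grid n} :=
  match k with
  | inl (inl i) => gline i
  | inl (inr j) => gcol j
  | inr (a, b) => gdiag n (a : nat).+1 (b : nat).+1
  end.

(* Main.v *)
Require Import Defs.
From mathcomp Require Import all_boot zify.

Lemma modS_inj n u v : u < n -> v < n -> u.+1 = v.+1 %[mod n] -> u = v.
Proof.
move=> hu hv; rewrite -addn1 -(addn1 v) => /eqP; rewrite eqn_modDr => /eqP.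
by rewrite !modn_small.
Qed.

Lemma rn_mod n m : 0 < n -> rn n m = m %[mod n].
Proof. by move=> hn; rewrite /rn; case: ifP => [/eqP ->|_]; rewrite ?modnn ?modn_mod. Qed.

Lemma rn_range n m : 0 < n -> 0 < rn n m <= n.
Proof.
move=> hn; rewrite /rn; case: ifP => [_|/negbT h]; first by rewrite hn leqnn.
by rewrite lt0n h ltnW // ltn_pmod.
Qed.

Lemma diag_mem n A B (p : grid n) :
  (p \in gdiag n A B) = ((p.2 : nat).+1 == A * (p.1 : nat).+1 + B %[mod n]).
Proof.
have hn : 0 < n by case: p => x _; case: x => x /=; lia.
rewrite inE; set m := A * _ + B; have y2 := ltn_ord p.2.
move: (p.2 : nat) y2 => y y2.
apply/eqP/eqP => [->|h]; first by rewrite rn_mod.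
have := @rn_range n m hn; rewrite -(@rn_mod n m hn) in h.
move=> /andP[r0 r1].
have := @modS_inj n y (rn n m).-1 y2 _ _.
rewrite prednK // => E; rewrite E //; lia.
Qed.

Lemma cancel_mod n c u v : coprime n c -> v - u < n -> u - v < n ->
  c * u = c * v %[mod n] -> u = v.
Proof.
wlog le : u v / u <= v.
  move=> W hc h1 h2 h; case: (leqP u v) => l; first exact: W.
  by symmetry; apply: W => //; lia.
move=> hc h1 _ /eqP; rewrite eq_sym eqn_mod_dvd ?leq_mul2l ?le ?orbT //.
rewrite -mulnBr Gauss_dvdr // => d.
have : v - u = 0.
  case E: (v - u) => [|k] //; rewrite E in d h1.
  by have := dvdn_leq (ltn0Sn k) d; lia.
lia.
Qed.

Lemma coprime_small n c : 1 < n -> 0 < c -> c < pdiv n -> coprime n c.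
Proof.
move=> hn hc hp; rewrite /coprime; apply/negPn/negP => /eqP g.
have g0 : 0 < gcdn n c by rewrite gcdn_gt0 hc orbT.
have g1 : 1 < gcdn n c by lia.
have := pdiv_min_dvd g1 (dvdn_gcdl n c).
have := dvdn_leq hc (dvdn_gcdr n c); lia.
Qed.

Lemma card_line n (i : 'I_n) : #|gline i| = n.
Proof.
have -> : gline i = setX [set i] setT by apply/setP => -[x y]; rewrite !inE andbT.
by rewrite cardsX cards1 cardsT card_ord mul1n.
Qed.

Lemma card_col n (i : 'I_n) : #|gcol i| = n.
Proof.
have -> : gcol i = setX setT [set i] by apply/setP => -[x y]; rewrite !inE.
by rewrite cardsX cards1 cardsT card_ord muln1.
Qed.

Lemma card_diag n A B : #|gdiag n A B| = n.
Proof.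
case: (posnP n) => [->|hn].
  by apply/eqP; rewrite cards_eq0; apply/eqP/setP => -[[x hx] ?]; exfalso; lia.
have fP : forall x : 'I_n, (rn n (A * x.+1 + B)).-1 < n.
  by move=> x; have := @rn_range n (A * x.+1 + B) hn; lia.
pose g (x : 'I_n) := (x, Ordinal (fP x)).
have -> : gdiag n A B = [set g x | x : 'I_n].
  apply/setP => -[x y]; rewrite inE; apply/eqP/imsetP => [h|[z _ [-> ->]]] /=.
    exists x => //; rewrite /g; congr (_, _); apply: val_inj => /=; rewrite -h //.
  have := @rn_range n (A * z.+1 + B) hn; lia.
rewrite card_imset ?card_ord //.
by move=> x1 x2 /(congr1 fst).
Qed.

Lemma diag_exists n A (x : grid n) : exists b : 'I_n, x \in gdiag n A b.+1.
Proof.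
have hn : 0 < n by case: x => -[x hx] _; lia.
set W := (x.2 : nat).+1 + (n - 1) * (A * (x.1 : nat).+1).
have bP : (rn n W).-1 < n by have := @rn_range n W hn; lia.
exists (Ordinal bP); rewrite diag_mem /= prednK; last by have := @rn_range n W hn; lia.
rewrite -modnDmr rn_mod // modnDmr /W.
set z := A * _; set Y := (x.2 : nat).+1.
have -> : z + (Y + (n - 1) * z) = z * n + Y by nia.
by rewrite modnMDl.
Qed.

Lemma diag_uniq n A (x : grid n) (b b' : 'I_n) :
  x \in gdiag n A b.+1 -> x \in gdiag n A b'.+1 -> b = b'.
Proof.
rewrite !diag_mem => /eqP h1 /eqP h2.
apply: val_inj; apply: (@modS_inj n); [exact: ltn_ord | exact: ltn_ord |].
by apply/eqP; rewrite -(eqn_modDl (A * (x.1 : nat).+1)) -h1 -h2.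
Qed.



Lemma card_pools n L (hL : 2 <= L) (x : grid n) :
  #|[set k | x \in @grid_family n L k]| = L.
Proof.
rewrite -sum1_card big_mkcond /= !big_sumType /=.
have E1 : forall (I : finType) (P : I -> bool) (i0 : I), (forall i, P i = (i == i0)) ->
    \sum_(i : I) (if P i then 1 else 0) = 1.
  move=> I P i0 hP; rewrite (bigD1 i0) //= hP eqxx big1 // => i hi.
  by rewrite hP (negbTE hi).
rewrite (E1 _ (fun i => inl (inl i) \in [set k | x \in @grid_family n L k]) x.1); last first.
  by move=> i; rewrite /= !inE eq_sym.
rewrite (E1 _ (fun i => inl (inr i) \in [set k | x \in @grid_family n L k]) x.2); last first.
  by move=> i; rewrite /= !inE eq_sym.
pose bf (a : 'I_(L - 2)) := xchoose (@diag_exists n a.+1 x).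
rewrite (eq_bigr (fun p => ((p.2 == bf p.1) : nat))); last first.
  move=> [a b] _; rewrite inE /=.
  have hb := xchooseP (@diag_exists n a.+1 x).
  case: ifP => h; apply/esym.
    by rewrite (@diag_uniq n _ _ _ _ h hb) eqxx.
  by case: eqP => // E; rewrite E /bf in h; rewrite h in hb.
rewrite -(pair_bigA _ (fun a b => ((b == bf a) : nat))) /=.
rewrite (eq_bigr (fun _ => 1)); last first.
  move=> a _; rewrite (bigD1 (bf a)) //= eqxx big1 // => b /negbTE -> //.
rewrite sum1_card card_ord; lia.
Qed.

Lemma diag_samex n A B (p q : grid n) :
  p \in gdiag n A B -> q \in gdiag n A B -> p.1 = q.1 -> p = q.
Proof.
case: p => x1 y1; case: q => x2 y2; rewrite !diag_mem /= => /eqP h1 /eqP h2 e.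
subst x2; congr (_, _); apply: val_inj; apply: (@modS_inj n); try exact: ltn_ord.
by rewrite h1 h2.
Qed.

Lemma diag_samey n A B (p q : grid n) : coprime n A ->
  p \in gdiag n A B -> q \in gdiag n A B -> p.2 = q.2 -> p = q.
Proof.
move=> hc hp hq e; apply: (@diag_samex n _ _ _ _ hp hq).
move: hp hq; case: p e => x1 y1; case: q => x2 y2 /= e.
rewrite !diag_mem /= => /eqP h1 /eqP h2; subst y2.
have h : A * x1.+1 = A * x2.+1 %[mod n].
  by apply/eqP; rewrite -(eqn_modDr B) -h1 -h2.
have hx1 := ltn_ord x1; have hx2 := ltn_ord x2.
have := @cancel_mod n _ _ _ hc _ _ h; rewrite /= => E; apply: val_inj => /=.
suff : x1.+1 = x2.+1 by case.
by apply: E; lia.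
Qed.

Lemma diag_two n A A' B B' (p q : grid n) : A < A' -> coprime n (A' - A) ->
  p \in gdiag n A B -> q \in gdiag n A B ->
  p \in gdiag n A' B' -> q \in gdiag n A' B' -> p = q.
Proof.
move=> lt hc hp hq hp' hq'; apply: (@diag_samex n _ _ _ _ hp hq).
move: hp hq hp' hq'; case: p => x1 y1; case: q => x2 y2 /=.
rewrite !diag_mem /= => /eqP h1 /eqP h2 /eqP h3 /eqP h4.
set c := A' - A.
have eA : A' = A + c by rewrite /c subnKC // ltnW.
set X1 := x1.+1; set X2 := x2.+1.
have e1 : (y1.+1 + y2.+1) %% n = ((A * X1 + B) + (A' * X2 + B')) %% n.
  by rewrite -modnDm h1 h4 modnDm.
have e2 : (y1.+1 + y2.+1) %% n = ((A' * X1 + B') + (A * X2 + B)) %% n.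
  by rewrite -modnDm h3 h2 modnDm.
have h : c * X2 = c * X1 %[mod n].
  apply/eqP; rewrite -(eqn_modDr (A * X1 + A * X2 + B + B')).
  have -> : c * X2 + (A * X1 + A * X2 + B + B') = (A * X1 + B) + (A' * X2 + B').
    by rewrite eA mulnDl; generalize (A * X1) (A * X2) (c * X2) B B'; clear; lia.
  have -> : c * X1 + (A * X1 + A * X2 + B + B') = (A' * X1 + B') + (A * X2 + B).
    by rewrite eA mulnDl; generalize (A * X1) (A * X2) (c * X1) B B'; clear; lia.
  by rewrite -e1 -e2.
have hx1 := ltn_ord x1; have hx2 := ltn_ord x2.
have := @cancel_mod n _ _ _ hc _ _ h => E; apply: val_inj => /=.
suff : X2 = X1 by rewrite /X1 /X2; case.
by apply: E; rewrite /X1 /X2; clear -hx1 hx2; lia.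
Qed.

Lemma mem_line n (i : 'I_n) (p : grid n) : (p \in gline i) = (p.1 == i).
Proof. by rewrite inE. Qed.
Lemma mem_col n (i : 'I_n) (p : grid n) : (p \in gcol i) = (p.2 == i).
Proof. by rewrite inE. Qed.

Lemma pair_ok n L (hn : 1 < n) (hp : L - 2 < pdiv n) (p q : grid n) : p != q ->
  #|[set i | (p \in @grid_family n L i) && (q \in @grid_family n L i)]| <= 1.
Proof.
move=> pq; apply/card_le1_eqP => k k'; rewrite !inE => /andP[h1 h2] /andP[h3 h4].
have hc : forall a : 'I_(L - 2), coprime n a.+1.
  move=> a; apply: coprime_small => //; have := ltn_ord a; lia.
have hc2 : forall a a' : 'I_(L - 2), a < a' -> coprime n (a'.+1 - a.+1).
  move=> a a' lt; apply: coprime_small => //; have := ltn_ord a'; lia.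
have F : p = q -> False by move=> E; rewrite E eqxx in pq.
have E1 : p.1 = q.1 -> p.2 = q.2 -> False.
  by move=> e1 e2; apply: F; clear -e1 e2; case: p q e1 e2 => ? ? [? ?] /= -> ->.
case: k h1 h2 => [[i|j]|[a b]] /= h1 h2; case: k' h3 h4 => [[i'|j']|[a' b']] /= h3 h4;
  rewrite ?mem_line ?mem_col in h1 h2 h3 h4.
- by rewrite -(eqP h1) -(eqP h3).
- by exfalso; apply: E1; rewrite ?(eqP h1) ?(eqP h2) ?(eqP h3) ?(eqP h4).
- by exfalso; apply: F; apply: (@diag_samex n _ _ _ _ h3 h4); rewrite (eqP h1) (eqP h2).
- by exfalso; apply: E1; rewrite ?(eqP h1) ?(eqP h2) ?(eqP h3) ?(eqP h4).
- by rewrite -(eqP h1) -(eqP h3).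
- by exfalso; apply: F; apply: (@diag_samey n _ _ _ _ (hc a') h3 h4); rewrite (eqP h1) (eqP h2).
- by exfalso; apply: F; apply: (@diag_samex n _ _ _ _ h1 h2); rewrite (eqP h3) (eqP h4).
- by exfalso; apply: F; apply: (@diag_samey n _ _ _ _ (hc a) h1 h2); rewrite (eqP h3) (eqP h4).
- case: (ltngtP a a') => [lt|lt|eq].
  + by exfalso; apply: F; apply: (@diag_two n _ _ _ _ _ _ _ (hc2 _ _ lt) h1 h2 h3 h4).
  + by exfalso; apply: F; apply: (@diag_two n _ _ _ _ _ _ _ (hc2 _ _ lt) h3 h4 h1 h2).
  + have ea : a = a' by apply: val_inj.
    subst a'; congr (inr (_, _)); exact: (@diag_uniq n _ _ _ _ h3 h1).
Qed.

Lemma bad n L (hn : 1 < n) (hL2 : L <= n.+1) (h : pdiv n <= L - 2) :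
  exists p q : grid n, p != q /\
    1 < #|[set i | (p \in @grid_family n L i) && (q \in @grid_family n L i)]|.
Proof.
set p := pdiv n.
have pp : prime p := pdiv_prime hn.
have p2 : 1 < p := prime_gt1 pp.
have pn : p %| n := pdiv_dvd n.
have ple : p <= n := dvdn_leq (ltnW hn) pn.
set d := n %/ p.
have pd : p * d = n by rewrite mulnC divnK.
have dlt : d < n by rewrite /d ltn_Pdiv // ltnW.
have n0 : 0 < n by lia.
have aP : p.-1 < L - 2 by lia.
have bP : n - p < n by lia.
pose o0 := Ordinal n0.
pose P : grid n := (o0, o0).
pose Q : grid n := (Ordinal dlt, o0).
pose k0 : pool_index n L := inl (inr o0).
pose k1 : pool_index n L := inr (Ordinal aP, Ordinal bP).
exists P, Q; split.
  rewrite /P /Q xpair_eqE negb_and; apply/orP; left; apply/eqP => /(congr1 val) /=.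
  have : 0 < d by rewrite /d divn_gt0 // ltnW.
  lia.
have sub : [set k0; k1] \subset [set i | (P \in @grid_family n L i) && (Q \in @grid_family n L i)].
  apply/subsetP => k; rewrite !inE => /orP[] /eqP -> /=; first by rewrite !mem_col.
  rewrite !diag_mem /=.
  have -> : p.-1.+1 = p by rewrite prednK // ltnW.
  have e1 : p * 1 + (n - p).+1 = 1 * n + 1 by clear -ple; lia.
  have e2 : p * d.+1 + (n - p).+1 = 2 * n + 1.
    by rewrite mulnS pd; clear -ple; lia.
  by rewrite e1 e2 !modnMDl eqxx.
have := subset_leq_card sub; rewrite cards2.
case: eqP => //= E; move: E; rewrite /k0 /k1 => E; discriminate E.
Qed.

Theorem lemma1 (n L : nat) (hn : 2 <= n) (hL1 : 2 <= L) (hL2 : L <= n.+1) :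
  is_multipool (@grid_family n L) n L <-> L - 2 < pdiv n.
Proof.
split.
- move=> [_ _ h3]; rewrite ltnNge; apply/negP => hle.
  have [P [Q [pq c]]] := @bad n L hn hL2 hle.
  have h := h3 P Q pq; rewrite leqNgt in h; by rewrite c in h.
- move=> hp; split.
  + by move=> [[i|j]|[a b]] /=; [exact: card_line | exact: card_col | exact: card_diag].
  + by move=> x; exact: card_pools.
  + by move=> x y; exact: pair_ok.
Qed.
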